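(* Let $G$ be a circle of circumference $1$, let $x_1,\dots,x_n\in G$ be pairwise distinct with no two of them antipodal, and let $y_1,\dots,y_n\in G$. Let $\{x_i,x_j\}\in A$ be a nearly antipodal pair. If $$\sum_{k=1}^n d(x_i,x_k)+\sum_{k=1}^n d(x_j,x_k)>\sum_{k=1}^n d(x_i,y_k)+\sum_{k=1}^n d(x_j,y_k),$$ then $\alpha^Y_{ij}>\alpha^X_{ij}$.
   Context: $d(x,y)$ is the length of the shorter arc between $x,y$; $\hat{x}$ is the antipodal point of $x$. For points $p,q$ that are neither equal nor antipodal, $(p,q)$ denotes the shorter open arc and $[p,q]$ the shorter closed arc between them. Two distinct points $x_i,x_j$ ($i\ne j$) form a nearly antipodal pair if no $x_k$ lies in $(x_i,\hat{x}_j)$ or in $(x_j,\hat{x}_i)$; $A$ is the set of nearly antipodal pairs. The critical arc of $\{x_i,x_j\}\in A$ is $\mathrm{crit}(x_i,x_j)=G\setminus[\hat{x}_i,\hat{x}_j]$ (the long open arc between $\hat x_i$ and $\hat x_j$). $\alpha^X_{ij}=|\{k:x_k\in\mathrm{crit}(x_i,x_j)\}|$ and $\alpha^Y_{ij}=|\{k:y_k\in\mathrm{crit}(x_i,x_j)\}|$. *)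

(* Defs.v *)
(* The circle G of circumference 1 is modelled as the
   half-open interval [0,1) of a real field R, with addition mod 1. *)
From HB Require Import structures.
From mathcomp Require Import all_boot all_order all_algebra.
Set Implicit Arguments. Unset Strict Implicit. Unset Printing Implicit Defensive.
Import Order.TTheory GRing.Theory Num.Theory.
Local Open Scope ring_scope.

Section Circle.
Variable R : realFieldType.

Definition onG (x : R) : bool := (0 <= x) && (x < 1).

Definition ccw (p q : R) : R := if p <= q then q - p else q - p + 1.

Definition dist (x y : R) : R := Num.min (ccw x y) (ccw y x).

Definition antip (x : R) : R := if x < 2^-1 then x + 2^-1 else x - 2^-1.

Definition ccw_open (p q z : R) : bool := (0 < ccw p z) && (ccw p z < ccw p q).

(* (p,q): the shorter open arc between p and q (p, q neither equal nor antipodal) *)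
Definition short_open (p q z : R) : bool :=
  if ccw p q < 2^-1 then ccw_open p q z else ccw_open q p z.

Definition short_closed (p q z : R) : bool :=
  [|| z == p, z == q | short_open p q z].

Definition nearly_antipodal (n : nat) (x : 'I_n -> R) (i j : 'I_n) : Prop :=
  i != j /\
  forall k : 'I_n, ~~ short_open (x i) (antip (x j)) (x k) /\
                   ~~ short_open (x j) (antip (x i)) (x k).

Definition crit (n : nat) (x : 'I_n -> R) (i j : 'I_n) (z : R) : bool :=
  ~~ short_closed (antip (x i)) (antip (x j)) z.

(* alpha_{ij}^X (w = x) and alpha_{ij}^Y (w = y) *)
Definition alpha (n : nat) (x w : 'I_n -> R) (i j : 'I_n) : nat :=
  #|[set k : 'I_n | crit x i j (w k)]|.

End Circle.

(* Main.v *)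
Require Import Defs.
From Stdlib Require Import QArith_base ZArith Lia.
From Stdlib Require Import OrderedRing RingMicromega QMicromega EnvRing Lqa.
From Stdlib.micromega Require Import Tauto Refl.
From HB Require Import structures.
From mathcomp Require Import all_boot all_order all_algebra.
Set Implicit Arguments. Unset Strict Implicit. Unset Printing Implicit Defensive.
Import Order.TTheory GRing.Theory Num.Theory.

Section Bridge.
Variable R : realFieldType.
Local Open Scope ring_scope.

Definition ZR (z : Z) : R := (Z.to_nat z)%:R - (Z.to_nat (Z.opp z))%:R.

Lemma zmod_rearr (a b c d : R) : a + b = c + d -> a - d = c - b.
Proof.
move=> H; apply/eqP; rewrite subr_eq addrAC -H addrK //.
Qed.

Lemma ZR_nat (z : Z) (a b : nat) : z = Z.sub (Z.of_nat a) (Z.of_nat b) -> ZR z = a%:R - b%:R.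
Proof.
move=> Hz; rewrite /ZR; apply: zmod_rearr.
rewrite -!natrD; congr (_%:R).
rewrite -!plusE; lia.
Qed.

Lemma ZR_add x y : ZR (Z.add x y) = ZR x + ZR y.
Proof.
rewrite (@ZR_nat (Z.add x y) (Z.to_nat x + Z.to_nat y) (Z.to_nat (Z.opp x) + Z.to_nat (Z.opp y))); last by rewrite !Nat2Z.inj_add; lia.
rewrite /ZR !natrD opprD addrACA //.
Qed.

Lemma ZR_mul x y : ZR (Z.mul x y) = ZR x * ZR y.
Proof.
rewrite (@ZR_nat (Z.mul x y) (Z.to_nat x * Z.to_nat y + Z.to_nat (Z.opp x) * Z.to_nat (Z.opp y))
   (Z.to_nat x * Z.to_nat (Z.opp y) + Z.to_nat (Z.opp x) * Z.to_nat y)); last by rewrite !Nat2Z.inj_add !Nat2Z.inj_mul; nia.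
rewrite /ZR !natrD !natrM mulrBl !mulrBr opprB opprD addrACA; congr (_ + _).

Qed.

Lemma ZR_opp x : ZR (Z.opp x) = - ZR x.
Proof. by rewrite /ZR Z.opp_involutive opprB. Qed.

Lemma ZR_pos p : ZR (Zpos p) = (Pos.to_nat p)%:R.
Proof. by rewrite /ZR /= subr0. Qed.

Lemma ZR_ge0 x : Z.le Z0 x -> 0 <= ZR x.
Proof.
move=> H; rewrite /ZR; have -> : Z.to_nat (Z.opp x) = 0%N by lia.
by rewrite subr0 ler0n.
Qed.

Lemma ZR_le x y : Z.le x y -> ZR x <= ZR y.
Proof.
move=> H; rewrite -subr_ge0 -ZR_opp -ZR_add; apply: ZR_ge0; lia.
Qed.

Lemma ZR_eq0 x : ZR x = 0 -> x = Z0.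
Proof.
rewrite /ZR => /eqP; rewrite subr_eq0 eqr_nat => /eqP H; lia.
Qed.


Definition phiQ (q : Q) : R := ZR (Qnum q) / (Pos.to_nat (Qden q))%:R.
Definition phi (q : Q) : R :=
  match q with
  | Qmake Z0 _ => 0
  | Qmake (Zpos xH) xH => 1
  | _ => phiQ q end.

Lemma pos_neq0 p : (Pos.to_nat p)%:R != 0 :> R.
Proof. rewrite pnatr_eq0; apply/eqP; lia. Qed.

Lemma pos_gt0 p : 0 < (Pos.to_nat p)%:R :> R.
Proof. rewrite ltr0n; apply/ssrnat.ltP; lia. Qed.

Lemma phiE q : phi q = phiQ q.
Proof.
case: q => [[|p|p] d] //=; first by rewrite /phiQ /ZR /= subrr mul0r.
by case: p => //; case: d => //; rewrite /phiQ ZR_pos /= divr1.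
Qed.

Lemma phi_add x y : phi (Qplus x y) = phi x + phi y.
Proof.
rewrite !phiE /phiQ /Qplus /= ZR_add !ZR_mul !ZR_pos Pos2Nat.inj_mul natrM.
by rewrite addf_div ?pos_neq0 // [X in _ + X]mulrC.
Qed.

Lemma phi_mul x y : phi (Qmult x y) = phi x * phi y.
Proof.
by rewrite !phiE /phiQ /Qmult /= ZR_mul Pos2Nat.inj_mul natrM mulf_div.
Qed.

Lemma phi_opp x : phi (Qopp x) = - phi x.
Proof. by rewrite !phiE /phiQ /Qopp /= ZR_opp mulNr. Qed.

Lemma phi_sub x y : phi (Qminus x y) = phi x - phi y.
Proof. by rewrite /Qminus phi_add phi_opp. Qed.

Lemma phi_eqb x y : Qeq_bool x y = true -> phi x = phi y.
Proof.
move/Qeq_bool_eq; rewrite /Qeq !phiE /phiQ => H.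
apply/eqP; rewrite eqr_div ?pos_neq0 // -!ZR_pos -!ZR_mul H //.
Qed.

Lemma phi_neqb x y : Qeq_bool x y = false -> phi x <> phi y.
Proof.
move=> H E; move: H.
have : Qeq x y.
  move: E; rewrite !phiE /phiQ => /eqP; rewrite eqr_div ?pos_neq0 // -!ZR_pos -!ZR_mul.
  rewrite -subr_eq0 -ZR_opp -ZR_add => /eqP/ZR_eq0; rewrite /Qeq; lia.
by move/Qeq_bool_iff => ->.
Qed.

Lemma phi_leb x y : Qle_bool x y = true -> phi x <= phi y.
Proof.
move/Qle_bool_imp_le; rewrite /Qle !phiE /phiQ => H.
rewrite ler_pdivrMr ?pos_gt0 // mulrAC ler_pdivlMr ?pos_gt0 //.
rewrite -!ZR_pos -!ZR_mul; exact: ZR_le.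
Qed.

Definition rle (x y : R) : Prop := x <= y.
Definition rlt (x y : R) : Prop := x < y.
Definition rminus (x y : R) : R := x - y.
Definition rplus (x y : R) : R := x + y.
Definition rtimes (x y : R) : R := x * y.
Definition ropp (x : R) : R := - x.

Lemma Rsor : SOR 0 1 rplus rtimes rminus ropp (@eq R) rle rlt.
Proof.
constructor; rewrite /rle /rlt /rplus /rtimes /rminus /ropp.
- by constructor; [move=> ? | move=> ? ? -> | move=> ? ? ? -> ->].
- by move=> ? ? -> ? ? ->.
- by move=> ? ? -> ? ? ->.
- by move=> ? ? ->.
- by move=> ? ? -> ? ? ->.
- by move=> ? ? -> ? ? ->.
- constructor.
  + exact: add0r.
  + exact: addrC.
  + exact: addrA.
  + exact: mul1r.
  + exact: mulrC.
  + exact: mulrA.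
  + exact: mulrDl.
  + by [].
  + exact: subrr.
- by move=> ?; rewrite lexx.
- by move=> n m H1 H2; apply/eqP; rewrite eq_le H1 H2.
- by move=> n m p; apply: le_trans.
- move=> n m; rewrite lt_neqAle; split; first by case/andP=> /eqP ? ->.
  by case=> -> /eqP ->.
- move=> n m; case: (ltgtP n m) => H; by [left | right; right | right; left].
- by move=> n m p H; rewrite lerD2l.
- by move=> n m; apply: mulr_gt0.
- by move=> /esym/eqP; rewrite oner_eq0.
Qed.

Lemma Raddon : SORaddon 0 1 rplus rtimes rminus ropp (@eq R) rle
  (Qmake Z0 xH) (Qmake (Zpos xH) xH) Qplus Qmult Qminus Qopp Qeq_bool Qle_bool phi (fun x => x) (pow_N 1 rtimes).
Proof.
constructor.
- constructor=> //.
  + exact: phi_add.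
  + exact: phi_sub.
  + exact: phi_mul.
  + exact: phi_opp.
  + exact: phi_eqb.
- by constructor.
- exact: phi_neqb.
- exact: phi_leb.
Qed.

Definition Reval_expr (env : PolEnv R) (e : PExpr Q) : R :=
  RingMicromega.eval_pexpr rplus rtimes rminus ropp phi (fun x => x) (pow_N 1 rtimes) env e.

Definition Reval_bop2 (o : Op2) (x y : R) : bool :=
  match o with
  | OpEq => x == y
  | OpNEq => x != y
  | OpLe => x <= y
  | OpGe => y <= x
  | OpLt => x < y
  | OpGt => y < x
  end.

Definition Reval_formula (env : PolEnv R) (k : kind) (f : Formula Q) : rtyp k :=
  match k as k0 return rtyp k0 with
  | isProp => RingMicromega.eval_formula rplus rtimes rminus ropp (@eq R) rle rlt phi (fun x => x) (pow_N 1 rtimes) env f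
  | isBool => let (l, o, r) := f in Reval_bop2 o (Reval_expr env l) (Reval_expr env r)
  end.

Lemma Reval_formula_compat env b f : hold b (Reval_formula env b f) <->
  RingMicromega.eval_formula rplus rtimes rminus ropp (@eq R) rle rlt phi (fun x => x) (pow_N 1 rtimes) env f.
Proof.
case: b => //=; case: f => l o r /=; rewrite /Reval_expr /rle /rlt.
case: o => /=; split; by [move/eqP | move=> ->; rewrite eqxx | move/eqP | move=> /eqP | ].
Qed.

Definition Reval_nformula :=
  RingMicromega.eval_nformula 0 rplus rtimes (@eq R) rle rlt phi.

Lemma RTautoChecker_sound : forall f w, QTautoChecker f w = true -> forall env, eval_bf (Reval_formula env) f.
Proof.
  intros f w.
  unfold QTautoChecker.
  apply tauto_checker_sound  with (eval:= Reval_formula) (eval':= Reval_nformula).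
  - exact (fun env d => eval_nformula_dec Rsor phi env d).
  - intros until env.
    unfold eval_nformula. unfold RingMicromega.eval_nformula.
    destruct t.
    apply (check_inconsistent_sound Rsor Raddon) ; auto.
  - unfold qdeduce. intros. revert H. apply (nformula_plus_nformula_correct Rsor Raddon);auto.
  - intros.
    rewrite Reval_formula_compat.
    eapply (cnf_normalise_correct Rsor Raddon)  ; eauto.
  - intros. rewrite Tauto.hold_eNOT. rewrite Reval_formula_compat.
    now eapply (cnf_negate_correct Rsor Raddon);eauto.
  - intros t w0.
    unfold eval_tt.
    intros.
    rewrite (make_impl_map (Reval_nformula env)).
    + eapply (checker_nf_sound Rsor Raddon); eauto.
    + tauto.
Qed.

End Bridge.

Definition mkenv (R : realFieldType) (l : seq R) : PolEnv R := fun p => nth 0%R l (Pos.to_nat p).-1.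

Ltac rfind x l n :=
  lazymatch l with
  | cons ?y ?l' => match constr:(tt) with
                   | _ => let _ := match tt with _ => first [constr_eq x y | unify x y] end in constr:(Some n)
                   | _ => rfind x l' constr:(Pos.succ n)
                   end
  | nil => constr:(@None positive)
  end.

Ltac reify_e e l :=
  lazymatch e with
  | @GRing.zero _ => constr:((PEc (Qmake Z0 xH), l))
  | @GRing.one _ => constr:((PEc (Qmake (Zpos xH) xH), l))
  | @GRing.add _ ?a ?b =>
      lazymatch reify_e a l with (?ea, ?l1) =>
      lazymatch reify_e b l1 with (?eb, ?l2) => constr:((PEadd ea eb, l2)) end end
  | @GRing.mul _ ?a ?b =>
      lazymatch reify_e a l with (?ea, ?l1) =>
      lazymatch reify_e b l1 with (?eb, ?l2) => constr:((PEmul ea eb, l2)) end end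
  | @GRing.opp _ ?a =>
      lazymatch reify_e a l with (?ea, ?l1) => constr:((PEopp ea, l1)) end
  | _ =>
      lazymatch rfind e l xH with
      | Some ?n => constr:((@PEX Q n, l))
      | None => let l' := eval cbv [cat] in (l ++ [:: e]) in
                let n := eval vm_compute in (Pos.of_nat (size l')) in
                constr:((@PEX Q n, l'))
      end
  end.

Ltac reify_cmp op a b l :=
  lazymatch reify_e a l with (?ea, ?l1) =>
  lazymatch reify_e b l1 with (?eb, ?l2) =>
    constr:((A isProp (Build_Formula ea op eb) tt : BFormula (Formula Q) isProp, l2)) end end.

Ltac reify_f f l :=
  lazymatch f with
  | is_true (@Order.le _ _ ?a ?b) => reify_cmp OpLe a b l
  | is_true (@Order.lt _ _ ?a ?b) => reify_cmp OpLt a b l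
  | @eq _ ?a ?b => reify_cmp OpEq a b l
  | False => constr:((FF isProp : BFormula (Formula Q) isProp, l))
  | ?P -> ?B =>
      lazymatch reify_f P l with (?fa, ?l1) =>
      lazymatch reify_f B l1 with (?fb, ?l2) =>
        constr:((IMPL fa None fb : BFormula (Formula Q) isProp, l2)) end end
  | _ => constr:((X isProp f : BFormula (Formula Q) isProp, l))
  end.

Ltac rlra_core R :=
  lazymatch goal with |- ?G =>
    lazymatch reify_f G (@nil R) with (?ff, ?l) =>
      let ff' := eval vm_compute in ff in
      change (eval_bf (@Reval_formula R (@mkenv R l)) ff');
      let w := fresh "w" in
      wlra_Q w ff';
      apply (@RTautoChecker_sound R ff' w); vm_compute; reflexivity
    end end.


Ltac rlra_revert R :=
  repeat match goal with
  | H : is_true (@Order.le _ _ ?a _) |- _ => let _ := constr:(a : R) in revert H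
  | H : is_true (@Order.lt _ _ ?a _) |- _ => let _ := constr:(a : R) in revert H
  | H : @eq ?T ?a _ |- _ => let _ := constr:(a : R) in revert H
  end.

Ltac rlra R := rlra_revert R; rlra_core R.

Ltac norm_hyps :=
  repeat match goal with
  | H : is_true (~~ (@Order.le _ _ _ _)) |- _ => rewrite -Order.TotalTheory.ltNge in H
  | H : is_true (~~ (@Order.lt _ _ _ _)) |- _ => rewrite -Order.TotalTheory.leNgt in H
  | H : is_true (~~ (_ && _)) |- _ => rewrite negb_and in H
  | H : is_true (~~ (_ || _)) |- _ => rewrite negb_or in H
  | H : is_true (~~ (~~ _)) |- _ => rewrite negbK in H
  | H : is_true (_ && _) |- _ => case/andP: H => ? ?
  | H : is_true (_ || _) |- _ => case/orP: H => ?
  | H : is_true (~~ (_ == _)) |- _ => rewrite Order.TotalTheory.neq_lt in H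
  | H : is_true true |- _ => clear H
  | H : is_true false |- _ => discriminate H
  | H : is_true (~~ true) |- _ => discriminate H
  | H : is_true (~~ false) |- _ => clear H
  end.

Ltac revert_all R :=
  repeat match goal with
  | H : is_true (@Order.le _ _ ?a _) |- _ => let _ := constr:(a : R) in revert H
  | H : is_true (@Order.lt _ _ ?a _) |- _ => let _ := constr:(a : R) in revert H
  | H : @eq ?T ?a _ |- _ => let _ := constr:(a : R) in revert H
  | H : ?P |- _ => lazymatch type of P with Prop => lazymatch P with context [if _ then _ else _] => revert H end end
  end.

Ltac find_inner :=
  match goal with |- context [if ?c then _ else _] =>
    lazymatch c with context [if _ then _ else _] => fail | _ => c end end.

Ltac rsolve_rec R :=
  first [ rlra R
        | let c := find_inner in let H := fresh "Hc" in
          destruct c eqn:H; [ change (is_true c) in H | move/negbT: H => H];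
          intros; norm_hyps; revert_all R; rsolve_rec R ].

Lemma half_half (R : realFieldType) : (2^-1 + 2^-1 = 1 :> R)%R.
Proof. by rewrite -mulr2n -[(_ *+ 2)%R]mulr_natr mulVf // pnatr_eq0. Qed.

Ltac rsolve2 R := have ? := half_half R; intros; norm_hyps; revert_all R; rsolve_rec R.



Section Geo.
Variable R : realFieldType.
Local Open Scope ring_scope.
Implicit Types a b c p q z x u : R.

Lemma onG_antip p : onG p -> onG (antip p).
Proof. rewrite /onG /antip => Hp; apply/andP; split; rsolve2 R. Qed.

Lemma onG_ccw p q : onG p -> onG q -> onG (ccw p q).
Proof. rewrite /onG /ccw => Hp Hq; apply/andP; split; rsolve2 R. Qed.

Lemma I1 a p q : onG a -> onG p -> onG q -> ccw (ccw a p) (ccw a q) = ccw p q.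
Proof. rewrite /onG /ccw => *; rsolve2 R. Qed.

Lemma I2 a p : onG a -> onG p -> ccw a (antip p) = antip (ccw a p).
Proof. rewrite /onG /ccw /antip => *; rsolve2 R. Qed.

Lemma I5 a p q : onG a -> onG p -> onG q -> ccw a p = ccw a q -> p = q.
Proof. rewrite /onG /ccw => *; rsolve2 R. Qed.

Lemma K1 a b : onG a -> onG b -> ccw a b = 2^-1 -> a = antip b.
Proof. rewrite /onG /ccw /antip => *; rsolve2 R. Qed.

Lemma dist_le_half p q : onG p -> onG q -> dist p q <= 2^-1.
Proof. rewrite /onG /dist /ccw /Order.min => *; rsolve2 R. Qed.

Lemma ccw_self a : ccw a a = 0.
Proof. by rewrite /ccw lexx subrr. Qed.

Lemma antip0 : antip 0 = 2^-1 :> R.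
Proof. by rewrite /antip invr_gt0 ltr0n add0r. Qed.

Lemma antipL p : p < 2^-1 -> antip p = p + 2^-1 :> R.
Proof. by rewrite /antip => ->. Qed.

Lemma antipR p : 2^-1 < p -> antip p = p - 2^-1 :> R.
Proof. by rewrite /antip => /ltW; rewrite leNgt => /negbTE ->. Qed.

Lemma T_so a p q z : onG a -> onG p -> onG q -> onG z ->
  short_open (ccw a p) (ccw a q) (ccw a z) = short_open p q z.
Proof. by move=> Ha Hp Hq Hz; rewrite /short_open /ccw_open !I1. Qed.

Lemma T_eq a p q : onG a -> onG p -> onG q -> (ccw a p == ccw a q) = (p == q).
Proof. by move=> Ha Hp Hq; apply/eqP/eqP => [/I5|->]; last done; apply. Qed.

Lemma T_sc a p q z : onG a -> onG p -> onG q -> onG z ->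
  short_closed (ccw a p) (ccw a q) (ccw a z) = short_closed p q z.
Proof. by move=> Ha Hp Hq Hz; rewrite /short_closed !T_eq // T_so. Qed.

Lemma T_dist a p q : onG a -> onG p -> onG q -> dist (ccw a p) (ccw a q) = dist p q.
Proof. by move=> Ha Hp Hq; rewrite /dist !I1. Qed.


Lemma L1 a b z : onG a -> onG b -> onG z -> dist a b <= dist a z + dist b z.
Proof. rewrite /onG /dist /ccw /Order.min => Ha Hb Hz; rsolve2 R. Qed.

Lemma L2 a b z : onG a -> onG b -> onG z ->
  short_closed (antip a) (antip b) z -> dist a z + dist b z = 1 - dist a b.
Proof.
rewrite /onG => Ha Hb Hz.
rewrite /short_closed => /orP[/eqP->|/orP[/eqP->|]].
- rewrite /dist /ccw /antip /Order.min; rsolve2 R.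
- rewrite /dist /ccw /antip /Order.min; rsolve2 R.
- rewrite /short_open /ccw_open /dist /ccw /antip /Order.min; rsolve2 R.
Qed.

Lemma L4x c x : onG c -> onG x -> 0 < c -> c < 2^-1 ->
  ~~ short_open 0 (c + 2^-1) x -> ~~ short_open c (2^-1) x ->
  ~~ short_closed (2^-1) (c + 2^-1) x -> dist 0 x + dist c x = dist 0 c.
Proof.
rewrite /onG => Hb Hx.
rewrite /short_closed /short_open /ccw_open /dist /ccw /Order.min; rsolve2 R.
Qed.

Lemma L4y c x : onG c -> onG x -> 2^-1 < c ->
  ~~ short_open 0 (c - 2^-1) x -> ~~ short_open c (2^-1) x ->
  ~~ short_closed (2^-1) (c - 2^-1) x -> dist 0 x + dist c x = dist 0 c.
Proof.
rewrite /onG => Hb Hx.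
rewrite /short_closed /short_open /ccw_open /dist /ccw /Order.min; rsolve2 R.
Qed.

Lemma L4 a b x : onG a -> onG b -> onG x -> a != b -> a != antip b ->
  ~~ short_open a (antip b) x -> ~~ short_open b (antip a) x ->
  ~~ short_closed (antip a) (antip b) x -> dist a x + dist b x = dist a b.
Proof.
move=> Ha Hb Hx Hab Hab' H1 H2 H3.
rewrite -(T_dist Ha Ha Hx) -(T_dist Ha Hb Hx) -(T_dist Ha Ha Hb) ccw_self.
have Hc := onG_ccw Ha Hb; have Hu := onG_ccw Ha Hx.
have Hc0 : 0 < ccw a b.
  rewrite lt_neqAle; move: Hc => /andP[-> _]; rewrite andbT.
  apply/eqP => E; move/eqP: Hab; apply; apply: (I5 Ha Ha Hb); by rewrite ccw_self.
have Hch : ccw a b != 2^-1.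
  apply/eqP => /(K1 Ha Hb) E; by rewrite E eqxx in Hab'.
move: H1 H2 H3.
rewrite -(T_so Ha Ha (onG_antip Hb) Hx) -(T_so Ha Hb (onG_antip Ha) Hx).
rewrite -(T_sc Ha (onG_antip Ha) (onG_antip Hb) Hx).
rewrite !I2 // ccw_self antip0.
case: (ltgtP (ccw a b) (2^-1)) => [Hlt|Hgt|Heq]; last by rewrite Heq eqxx in Hch.
- rewrite antipL //; exact: L4x.
- rewrite antipR //; exact: L4y.
Qed.

End Geo.

Unset Implicit Arguments.
Local Open Scope ring_scope.

Lemma sum_g (R : realFieldType) (n : nat) (d : R) (c : 'I_n -> bool) :
  \sum_(k < n) (if c k then d else 1 - d)
  = (1 - d) *+ n - (1 - d - d) *+ #|[set k | c k]|.
Proof.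
have -> : \sum_(k < n) (if c k then d else 1 - d)
   = \sum_(k < n) ((1 - d) - (if c k then 1 - d - d else 0)).
  apply: eq_bigr => k _; case: (c k); last by rewrite subr0.
  rlra R.
rewrite sumrB sumr_const card_ord; congr (_ - _).
rewrite -big_mkcond /= -sumr_const; apply: eq_bigl => k; by rewrite inE.
Qed.

Theorem mainTheorem8 (R : realFieldType) (n : nat) (x y : 'I_n -> R) (i j : 'I_n) :
  (forall k, onG (x k)) ->
  (forall k, onG (y k)) ->
  injective x ->
  (forall k l : 'I_n, x k != antip (x l)) ->
  nearly_antipodal x i j ->
  \sum_(k < n) dist (x i) (y k) + \sum_(k < n) dist (x j) (y k)
    < \sum_(k < n) dist (x i) (x k) + \sum_(k < n) dist (x j) (x k) ->
  (alpha x x i j < alpha x y i j)%N.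
Proof.
move=> Hx Hy Hinj Hna [Hij Hk] Hsum.
have Ha := Hx i; have Hb := Hx j.
have Hab : x i != x j by apply: contra Hij => /eqP/Hinj ->.
have Hab' := Hna i j.
set d := dist (x i) (x j).
have HX : \sum_(k < n) (dist (x i) (x k) + dist (x j) (x k))
   = \sum_(k < n) (if crit x i j (x k) then d else 1 - d).
  apply: eq_bigr => k _; case: ifP => Hc.
  - case: (Hk k) => H1 H2; exact: L4.
  - apply: L2 => //; by move/negbT: Hc; rewrite /crit negbK.
have HY : \sum_(k < n) (if crit x i j (y k) then d else 1 - d)
   <= \sum_(k < n) (dist (x i) (y k) + dist (x j) (y k)).
  apply: ler_sum => k _; case: ifP => Hc.
  - exact: L1.
  - rewrite L2 //; by move/negbT: Hc; rewrite /crit negbK.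
have Hd := dist_le_half Ha Hb.
rewrite !sum_g in HX HY.
rewrite -!big_split /= HX in Hsum.
rewrite ltnNge; apply/negP => Hle.
have Ht : 0 <= 1 - d - d by rsolve2 R.
have := ler_wpMn2l Ht Hle.
rewrite /alpha in Hle *.
move: HY Hsum; set A := (1 - d - d) *+ _; set B := (1 - d - d) *+ _.
move=> HY Hsum HAB.
rlra R.
Qed.
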